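(* If $\mathcal A$ is a finite non-associative algebra which has a qualitative representation, and $n$ is the number of atoms of $\mathcal A$, then $\mathcal A$ has a qualitative representation whose base has at most $3n^3$ points.
   Context: A non-associative algebra is an algebra $(A,0,1,+,-,1',\breve{\ },;)$ such that $(A,0,1,+,-)$ is a boolean algebra (with $x\cdot y=-(-x+-y)$ and $x\le y\iff x+y=y$); $1';x=x=x;1'$, $\breve{\breve x}=x$, $(x;y)\breve{}=\breve y;\breve x$; $\breve 0=x;0=0$, $(x+y)\breve{}=\breve x+\breve y$, $x;(y+z)=x;y+x;z$; and the Peircean law holds: $x;y\cdot\breve z=0$ iff $y;z\cdot\breve x=0$. An atom is a minimal nonzero element. A qualitative representation of $\mathcal A$ over base $D$ is an injective map $\phi:A\to\wp(D\times D)$ such that $0^\phi=\varnothing$, $1^\phi=D\times D$, $(1')^\phi=\{(x,x):x\in D\}$, $(a+b)^\phi=a^\phi\cup b^\phi$, $(-a)^\phi=(D\times D)\setminus a^\phi$, $(\breve a)^\phi=\{(y,x):(x,y)\in a^\phi\}$, and for all $a,b,c\in A$: $c^\phi\supseteq a^\phi\circ b^\phi\iff c\ge a;b$ (where $r\circ s$ is relational composition). *)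

(* Defs.v *)
From mathcomp Require Import all_boot.
Set Implicit Arguments. Unset Strict Implicit. Unset Printing Implicit Defensive.

(* Signature (A,0,1,+,-,1',conv,;) of a non-associative algebra. *)
Record naa_ops (A : Type) := NaaOps {
  nzero  : A;
  none   : A;
  nplus  : A -> A -> A;
  ncompl : A -> A;
  nident : A;
  nconv  : A -> A;
  ncomp  : A -> A -> A
}.

Section NAA.
Variables (A : eqType) (o : naa_ops A).

Definition nmeet (x y : A) : A := ncompl o (nplus o (ncompl o x) (ncompl o y)).
Definition nle (x y : A) : bool := nplus o x y == y.

Definition is_boolean_algebra : Prop :=
  ((forall x y z, nplus o x (nplus o y z) = nplus o (nplus o x y) z) /\
      (forall x y z, nmeet x (nmeet y z) = nmeet (nmeet x y) z) /\
      (forall x y, nplus o x y = nplus o y x) /\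
      (forall x y, nmeet x y = nmeet y x) /\
      (forall x y, nplus o x (nmeet x y) = x) /\
      (forall x y, nmeet x (nplus o x y) = x) /\
      (forall x y z, nmeet x (nplus o y z) = nplus o (nmeet x y) (nmeet x z)) /\
      (forall x, nplus o x (nzero o) = x /\ nmeet x (none o) = x) /\
      (forall x, nplus o x (ncompl o x) = none o /\ nmeet x (ncompl o x) = nzero o)).

Definition is_naa : Prop :=
  (is_boolean_algebra /\
      (forall x, ncomp o (nident o) x = x /\ ncomp o x (nident o) = x) /\
      (forall x, nconv o (nconv o x) = x) /\
      (forall x y, nconv o (ncomp o x y) = ncomp o (nconv o y) (nconv o x)) /\
      (forall x, nconv o (nzero o) = nzero o /\ ncomp o x (nzero o) = nzero o) /\
      (forall x y, nconv o (nplus o x y) = nplus o (nconv o x) (nconv o y)) /\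
      (forall x y z, ncomp o x (nplus o y z) = nplus o (ncomp o x y) (ncomp o x z)) /\
      (forall x y z, nmeet (ncomp o x y) (nconv o z) = nzero o <->
                     nmeet (ncomp o y z) (nconv o x) = nzero o)).

(* Binary relations on D as predicates; r = s as sets means pointwise iff. *)
Definition rcomp (D : Type) (r s : D -> D -> Prop) : D -> D -> Prop :=
  fun x z => exists y, r x y /\ s y z.

Definition qual_rep (D : Type) (phi : A -> D -> D -> Prop) : Prop :=
  ((forall a b, (forall x y, phi a x y <-> phi b x y) -> a = b) /\
      (forall x y, ~ phi (nzero o) x y) /\
      (forall x y, phi (none o) x y) /\
      (forall x y, phi (nident o) x y <-> x = y) /\
      (forall a b x y, phi (nplus o a b) x y <-> phi a x y \/ phi b x y) /\
      (forall a x y, phi (ncompl o a) x y <-> ~ phi a x y) /\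
      (forall a x y, phi (nconv o a) x y <-> phi a y x) /\
      (forall a b c, (forall x z, rcomp (phi a) (phi b) x z -> phi c x z)
                     <-> nle (ncomp o a b) c)).

End NAA.

Definition is_atom (A : finType) (o : naa_ops A) (a : A) : bool :=
  (a != nzero o) && [forall b : A, nle o b a ==> (b == nzero o) || (b == a)].

Definition natoms (A : finType) (o : naa_ops A) : nat :=
  #|[pred a : A | is_atom o a]|.

(* Main.v *)
Require Import Defs.
From mathcomp Require Import all_boot.
From Stdlib Require Import Classical ClassicalEpsilon.
Set Implicit Arguments. Unset Strict Implicit. Unset Printing Implicit Defensive.

Definition pb (P : Prop) : bool := if excluded_middle_informative P then true else false.
Lemma pbP (P : Prop) : reflect P (pb P).
Proof. rewrite /pb; case: excluded_middle_informative => h; by constructor. Qed.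

Lemma L_meet (A : eqType) (o : naa_ops A) (D : Type) (phi : A -> D -> D -> Prop)
  (Hq : qual_rep o phi) a b x y :
  phi (nmeet o a b) x y <-> phi a x y /\ phi b x y.
Proof.
case: Hq => [Hinj [H0 [H1 [Hid [Hplus [Hcompl [Hconv Hcomp]]]]]]].
rewrite /nmeet Hcompl Hplus !Hcompl. tauto.
Qed.

Lemma L_le (A : eqType) (o : naa_ops A) (D : Type) (phi : A -> D -> D -> Prop)
  (Hq : qual_rep o phi) a b :
  nle o a b <-> forall x y, phi a x y -> phi b x y.
Proof.
have Hq' := Hq.
case: Hq' => [Hinj [H0 [H1 [Hid [Hplus [Hcompl [Hconv Hcomp]]]]]]].
rewrite /nle; split.
- move/eqP => e x y h. rewrite -e Hplus. by left.
- move=> h; apply/eqP; apply: Hinj => x y; rewrite Hplus. split; last by right.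
  case=> //; exact: h.
Qed.

Lemma L_atom_edge (A : finType) (o : naa_ops A) (D : Type) (phi : A -> D -> D -> Prop)
  (Hq : qual_rep o phi) p q : exists c, is_atom o c /\ phi c p q.
Proof.
have Hq' := Hq.
case: Hq' => [Hinj [H0 [H1 [Hid [Hplus [Hcompl [Hconv Hcomp]]]]]]].
have P1 : pb (phi (none o) p q) by apply/pbP.
case: (@arg_minnP A (none o) (fun c => pb (phi c p q)) (fun c => #|[pred y | nle o y c]|) P1) => c /pbP Pc Hmin.
have key : forall b, nle o b c -> phi b p q -> nle o c b.
  move=> b Hbc Pb.
  have sub : [pred y | nle o y b] \subset [pred y | nle o y c].
    apply/subsetP => y; rewrite !inE => /(L_le Hq) Hyb; apply/(L_le Hq) => u v h.
    by apply: (proj1 (L_le Hq b c) Hbc); apply: Hyb.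
  have eqc : #|[pred y | nle o y b]| = #|[pred y | nle o y c]|.
    apply/eqP; rewrite eqn_leq subset_leq_card //=; apply: Hmin; exact/pbP.
  have := (subset_cardP eqc sub) c; rewrite !inE => ->.
  by apply/(L_le Hq).
exists c; split=> //.
apply/andP; split.
  by apply/eqP => e; rewrite e in Pc; apply: (H0 p q).
apply/forallP => b; apply/implyP => Hbc.
case: (classic (phi b p q)) => Pb.
  have Hcb := key b Hbc Pb.
  have -> : b = c.
    apply: Hinj => x y; split; [exact: (proj1 (L_le Hq _ _) Hbc) | exact: (proj1 (L_le Hq _ _) Hcb)].
  by rewrite eqxx orbT.
have Hc' : nle o (nmeet o c (ncompl o b)) c.
  by apply/(L_le Hq) => x y /(L_meet Hq) [].
have Pc' : phi (nmeet o c (ncompl o b)) p q.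
  by apply/(L_meet Hq); split=> //; apply/Hcompl.
have := key _ Hc' Pc' => /(L_le Hq) Hcc.
have -> : b = nzero o.
  apply: Hinj => x y; split; last by move/H0.
  move=> hb. have hc := proj1 (L_le Hq _ _) Hbc x y hb.
  by case/(L_meet Hq): (Hcc x y hc) => _ /Hcompl.
by rewrite eqxx.
Qed.

Lemma L_atom_sub (A : finType) (o : naa_ops A) (D : Type) (phi : A -> D -> D -> Prop)
  (Hq : qual_rep o phi) c a p q :
  is_atom o c -> phi c p q -> phi a p q -> forall x y, phi c x y -> phi a x y.
Proof.
have Hq' := Hq.
case: Hq' => [Hinj [H0 [H1 [Hid [Hplus [Hcompl [Hconv Hcomp]]]]]]].
case/andP => _ /forallP /(_ (nmeet o c a)) /implyP H hc ha.
have Hle : nle o (nmeet o c a) c by apply/(L_le Hq) => x y /(L_meet Hq) [].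
case/orP: (H Hle) => /eqP e.
  by have := H0 p q; rewrite -e; case; apply/(L_meet Hq).
by move=> x y; rewrite -e => /(L_meet Hq) [].
Qed.

Definition tri (A : finType) (D : Type) (phi : A -> D -> D -> Prop) (x y z : A) : Prop :=
  exists p q r, phi x p q /\ phi y q r /\ phi z p r.

Definition gfun (A : finType) (o : naa_ops A) (D : Type) (phi : A -> D -> D -> Prop)
  (i : ({a : A | is_atom o a} * {a : A | is_atom o a} * {a : A | is_atom o a} * 'I_3)%type)
  : option D :=
  let '(x, y, z, k) := i in
  match excluded_middle_informative (tri phi (val x) (val y) (val z)) with
  | left H =>
    let (p, H1) := constructive_indefinite_description _ H in
    let (q, H2) := constructive_indefinite_description _ H1 in
    let (r, _) := constructive_indefinite_description _ H2 in
    Some (if (k : nat) == 0 then p else if (k : nat) == 1 then q else r)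
  | right _ => None
  end.

Lemma gfun_spec (A : finType) (o : naa_ops A) (D : Type) (phi : A -> D -> D -> Prop) (x y z : {a : A | is_atom o a}) :
  tri phi (val x) (val y) (val z) ->
  exists p q r, phi (val x) p q /\ phi (val y) q r /\ phi (val z) p r /\
    @gfun A o D phi (x, y, z, ord0) = Some p /\
    @gfun A o D phi (x, y, z, Ordinal (isT : 1 < 3)) = Some q /\
    @gfun A o D phi (x, y, z, Ordinal (isT : 2 < 3)) = Some r.
Proof.
move=> H; rewrite /gfun.
case: excluded_middle_informative => // H'.
case: constructive_indefinite_description => p H1.
case: constructive_indefinite_description => q H2.
case: constructive_indefinite_description => r [h1 [h2 h3]].
by exists p, q, r.
Qed.

Theorem mainTheorem6 (A : finType) (o : naa_ops A) :
  is_naa o ->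
  (exists (D : Type) (phi : A -> D -> D -> Prop), qual_rep o phi) ->
  exists (D : finType) (phi : A -> D -> D -> Prop),
    qual_rep o phi /\ #|D| <= 3 * (natoms o) ^ 3.
Proof.
move=> _ [D [phi Hq]].
have Hq' := Hq; case: Hq' => [Hinj [H0 [H1 [Hid [Hplus [Hcompl [Hconv Hcomp]]]]]]].
pose T := {a : A | is_atom o a}.
pose I := (T * T * T * 'I_3)%type.
pose g := @gfun A o D phi.
pose canon (i : I) := pb (exists d, g i = Some d /\
                               forall j, g j = Some d -> enum_rank i <= enum_rank j).
pose D' := {i : I | canon i}.
pose phi' := fun a (i j : D') =>
  exists d e, g (val i) = Some d /\ g (val j) = Some e /\ phi a d e.
have Hpt : forall i : D', exists d, g (val i) = Some d.
  by case=> i /= /pbP [d [h _]]; exists d.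
have Hcan : forall j d, g j = Some d -> exists i : D', g (val i) = Some d.
  move=> j d hj.
  have Pj : pb (g j = Some d) by apply/pbP.
  case: (@arg_minnP I j (fun j => pb (g j = Some d)) (fun j => enum_rank j) Pj)
    => i /pbP gi Hmin.
  have ci : canon i.
    apply/pbP; exists d; split=> // j' gj'; apply: Hmin; exact/pbP.
  by exists (exist _ i ci).
have Htri : forall x y z : T, tri phi (val x) (val y) (val z) ->
   exists (i j k : D') p q r, g (val i) = Some p /\ g (val j) = Some q /\
     g (val k) = Some r /\ phi (val x) p q /\ phi (val y) q r /\ phi (val z) p r.
  move=> x y z /gfun_spec [p [q [r [h1 [h2 [h3 [g1 [g2 g3]]]]]]]].
  case: (Hcan _ _ g1) => i gi; case: (Hcan _ _ g2) => j gj; case: (Hcan _ _ g3) => k gk.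
  by exists i, j, k, p, q, r.
have Hatom : forall p q, exists x : T, phi (val x) p q.
  move=> p q; case: (L_atom_edge Hq p q) => c [ac hc].
  by exists (exist _ c ac).
exists D', phi'; split; last first.
  rewrite card_sig; apply: leq_trans (max_card _) _.
  rewrite !card_prod card_ord card_sig /natoms.
  rewrite [3 * _]mulnC !expnS expn0 muln1 !mulnA.
  by [].
have Hsome : forall (i : D') d e, g (val i) = Some d -> g (val i) = Some e -> d = e.
  by move=> i d e -> [].
have Hsub : forall a b, (forall i j, phi' a i j -> phi' b i j) ->
    forall p q, phi a p q -> phi b p q.
  move=> a b Hab p q ha; apply: NNPP => hb.
  case: (Hatom p q) => x hx; case: (Hatom q q) => y hy.
  case: (Htri x y x); first by exists p, q, q.
  move=> i [j [k [p' [q' [r' [gi [gj [gk [h1 [h2 h3]]]]]]]]]].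
  have ha' := L_atom_sub Hq (valP x) hx ha h1.
  have hb' : phi (ncompl o b) p q by apply/Hcompl.
  have := L_atom_sub Hq (valP x) hx hb' h1 => /Hcompl; apply.
  case: (Hab i j); first by exists p', q'.
  by move=> d [e [gi' [gj' hde]]]; rewrite (Hsome _ _ _ gi gi') (Hsome _ _ _ gj gj').
split.
  move=> a b Hab; apply: Hinj => p q; split; apply: Hsub => i j; apply Hab.
split.
  by move=> i j [d [e [_ [_ /H0]]]].
split.
  move=> i j; case: (Hpt i) => d gd; case: (Hpt j) => e ge; by exists d, e.
split.
  move=> i j; split.
    case=> d [e [gi [gj /Hid de]]]; subst e.
    case: i gi => i /= ci gi; case: j gj => j /= cj gj.
    apply: val_inj => /=.
    case/pbP: (ci) => d1 [g1 m1]; case/pbP: (cj) => d2 [g2 m2].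
    rewrite gi in g1; case: g1 => e1; subst d1.
    rewrite gj in g2; case: g2 => e2; subst d2.
    apply: enum_rank_inj; apply: val_inj; apply/eqP; rewrite eqn_leq.
    by rewrite (m1 j gj) (m2 i gi).
  move=> <-; case: (Hpt i) => d gd; exists d, d; split=> //; split=> //; exact/Hid.
split.
  move=> a b i j; split.
    case=> d [e [gi [gj /Hplus [h|h]]]]; [left|right]; by exists d, e.
  case=> [[d [e [gi [gj h]]]]|[d [e [gi [gj h]]]]]; exists d, e; do 2 split => //;
    apply/Hplus; tauto.
split.
  move=> a i j; split.
    case=> d [e [gi [gj /Hcompl h]]] [d' [e' [gi' [gj' h']]]].
    by apply: h; rewrite (Hsome _ _ _ gi gi') (Hsome _ _ _ gj gj').
  move=> hn; case: (Hpt i) => d gd; case: (Hpt j) => e ge.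
  exists d, e; do 2 split => //; apply/Hcompl => h; apply: hn; by exists d, e.
split.
  move=> a i j; split.
    by case=> d [e [gi [gj /Hconv h]]]; exists e, d.
  by case=> d [e [gj [gi h]]]; exists e, d; do 2 split => //; apply/Hconv.
move=> a b c; split; last first.
  move/Hcomp => Hc i k [j [[d [e [gi [gj hab]]]] [e' [f [gj' [gk hbc]]]]]].
  exists d, f; do 2 split => //; apply: Hc; exists e; split=> //.
  by rewrite (Hsome _ _ _ gj gj').
move=> Hres; apply/Hcomp => p r [q [ha hb]]; apply: NNPP => hc.
case: (Hatom p q) => x hx; case: (Hatom q r) => y hy; case: (Hatom p r) => z hz.
case: (Htri x y z); first by exists p, q, r.
move=> i [j [k [p' [q' [r' [gi [gj [gk [h1 [h2 h3]]]]]]]]]].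
have ha' := L_atom_sub Hq (valP x) hx ha h1.
have hb' := L_atom_sub Hq (valP y) hy hb h2.
have hc0 : phi (ncompl o c) p r by apply/Hcompl.
have := L_atom_sub Hq (valP z) hz hc0 h3 => /Hcompl; apply.
case: (Hres i k).
  by exists j; split; [exists p', q' | exists q', r'].
by move=> d [e [gi' [gk' hde]]]; rewrite (Hsome _ _ _ gi gi') (Hsome _ _ _ gk gk').
Qed.
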